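(* Let $a,n\in\mathbb{N}$, $k_1,\ldots,k_n\in\mathbb{N}$, $K=\operatorname{lcm}(k_1,\ldots,k_n)$, let $f_1,\ldots,f_n,g_1,\ldots,g_n$ be arbitrary arithmetic functions, and put $H(m)=\prod_{i=1}^n s^{(1)}_{f_i,g_i,\mathbf 1}(k_i,m)$. For $N\in\mathbb{N}$ let $\Psi^{(a)}(N)=\sum_{1\le\ell\le N^a,\ (\ell,N^a)_a=1}\omega(\ell)$ and $\Phi^{(a)}(N)=\#\{\ell\in\{1,\ldots,N^a\}:(\ell,N^a)_a=1\}$. (i) If $\omega$ is completely multiplicative, then $\sum_{j=1}^{K^a}\omega(j)\prod_{i=1}^n s^{(a)}_{f_i,g_i,\mathbf 1}(k_i,j)=\sum_{d|K}\omega(d)^a H(d)\Psi^{(a)}(K/d)$. (ii) If $\omega$ is completely additive, then $\sum_{j=1}^{K^a}\omega(j)\prod_{i=1}^n s^{(a)}_{f_i,g_i,\mathbf 1}(k_i,j)=\sum_{d|K}\omega(d^a)H(d)\Phi^{(a)}(K/d)+\sum_{d|K}H(d)\Psi^{(a)}(K/d)$.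
   Context: An arithmetic function is a map $\mathbb{N}\to\mathbb{C}$. For $a\in\mathbb{N}$, $s^{(a)}_{f,g,\mathbf 1}(k,j)=\sum_{d|k,\ d^a|j} f(d)\,g(k/d)$ (so $s^{(1)}_{f,g,\mathbf 1}(k,j)=\sum_{d|\gcd(k,j)}f(d)g(k/d)$). For $j,N\in\mathbb{N}$, the generalized gcd $(j,N^a)_a$ is the largest $d\in\mathbb{N}$ with $d|N$ and $d^a|j$. $\omega$ is completely multiplicative if $\omega(1)=1$ and $\omega(mn)=\omega(m)\omega(n)$; completely additive if $\omega(mn)=\omega(m)+\omega(n)$. *)

(* Defs.v *)
(* Arithmetic functions are modelled as nat -> algC
   (algebraic complex numbers); the value at 0 is irrelevant. *)
From HB Require Import structures.
From mathcomp Require Import all_boot all_order all_algebra all_field.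
Set Implicit Arguments. Unset Strict Implicit. Unset Printing Implicit Defensive.
Import Order.TTheory GRing.Theory Num.Theory.
Local Open Scope ring_scope.

Definition sfun (a : nat) (f g : nat -> algC) (k j : nat) : algC :=
  \sum_(d <- divisors k | (d ^ a %| j)%N) f d * g (k %/ d)%N.

(* generalized gcd (j, N^a)_a: largest d with d | N and d^a | j  (N >= 1) *)
Definition ggcd (a j N : nat) : nat :=
  \max_(d <- divisors N | (d ^ a %| j)%N) d.

Definition Psi (omega : nat -> algC) (a N : nat) : algC :=
  \sum_(1 <= l < (N ^ a).+1 | ggcd a l N == 1%N) omega l.

Definition Phi (a N : nat) : nat :=
  #|[set l : 'I_(N ^ a).+1 | (0 < l)%N && (ggcd a l N == 1%N)]|.

Definition completely_multiplicative (omega : nat -> algC) : Prop :=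
  omega 1%N = 1 /\ forall m n, (0 < m)%N -> (0 < n)%N -> omega (m * n)%N = omega m * omega n.

Definition completely_additive (omega : nat -> algC) : Prop :=
  forall m n, (0 < m)%N -> (0 < n)%N -> omega (m * n)%N = omega m + omega n.

(* Main.v *)
Require Import Defs.
From HB Require Import structures.
From mathcomp Require Import all_boot all_order all_algebra all_field.
From mathcomp Require Import zify ring.
Import Order.TTheory GRing.Theory Num.Theory.
Set Implicit Arguments. Unset Strict Implicit.

Lemma lcm_coprime x y : coprime x y -> lcmn x y = x * y.
Proof. by move=> /eqP cxy; rewrite -muln_lcm_gcd cxy muln1. Qed.

Lemma expn_lcm a e m : (lcmn e m) ^ a = lcmn (e ^ a) (m ^ a).
Proof.
case: (posnP e) => [->|e0].
  by rewrite lcm0n; case: a => [|a]; rewrite ?expn0 ?lcm1n // exp0n // lcm0n.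
case: (posnP m) => [->|m0].
  by rewrite lcmn0; case: a => [|a]; rewrite ?expn0 ?lcm1n // exp0n // lcmn0.
have g0 : 0 < gcdn e m by rewrite gcdn_gt0 e0.
have : exists e' m' g, [/\ e = e' * g, m = m' * g & coprime e' m'].
  exists (e %/ gcdn e m), (m %/ gcdn e m), (gcdn e m); split.
  - by rewrite divnK ?dvdn_gcdl.
  - by rewrite divnK ?dvdn_gcdr.
  - by rewrite /coprime -(eqn_pmul2r g0) mul1n muln_gcdl !divnK ?dvdn_gcdl ?dvdn_gcdr.
move=> [e' [m' [g [-> -> cop]]]].
rewrite -muln_lcml (lcm_coprime cop) !expnMn -muln_lcml lcm_coprime //.
by rewrite coprimeXl ?coprimeXr.
Qed.

Lemma pow_lcm_dvd a e m j : e ^ a %| j -> m ^ a %| j -> (lcmn e m) ^ a %| j.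
Proof. by move=> h1 h2; rewrite expn_lcm dvdn_lcm h1 h2. Qed.

Lemma ggcd_spec a j N : 0 < N ->
  [/\ ggcd a j N %| N, (ggcd a j N) ^ a %| j &
      forall e, e %| N -> e ^ a %| j -> e %| ggcd a j N].
Proof.
move=> N0.
have hin : (ggcd a j N \in divisors N /\ (ggcd a j N) ^ a %| j) \/ ggcd a j N = 0.
  rewrite /ggcd big_seq_cond.
  apply: (big_ind (fun x => (x \in divisors N /\ x ^ a %| j) \/ x = 0)); first by right.
    by move=> x y hx hy; rewrite /maxn; case: ifP => _; [exact: hy|exact: hx].
  by move=> i /andP[h1 h2]; left.
have hge : forall e, e \in divisors N -> e ^ a %| j -> e <= ggcd a j N.
  by move=> e h1 h2; apply: (leq_bigmax_seq (F := fun i => i)).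
have [c1 c2] : ggcd a j N \in divisors N /\ (ggcd a j N) ^ a %| j.
  case: hin => // h0; exfalso.
  by have := hge 1 (divisor1 N); rewrite exp1n dvd1n h0 => /(_ isT).
split => //; first by rewrite dvdn_divisors.
move=> e he hej.
have lc : lcmn e (ggcd a j N) %| N by rewrite dvdn_lcm he dvdn_divisors.
have lj := pow_lcm_dvd hej c2.
have le := hge (lcmn e (ggcd a j N)) ltac:(by rewrite -dvdn_divisors) lj.
have lpos : 0 < lcmn e (ggcd a j N) := dvdn_gt0 N0 lc.
have ge := dvdn_leq lpos (dvdn_lcmr e (ggcd a j N)).
have eq : lcmn e (ggcd a j N) = ggcd a j N by apply/eqP; rewrite eqn_leq le ge.
by rewrite -eq dvdn_lcml.
Qed.

Lemma ggcd_char a j N c : 0 < N -> c %| N -> c ^ a %| j ->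
  (forall e, e %| N -> e ^ a %| j -> e %| c) -> ggcd a j N = c.
Proof.
move=> N0 h1 h2 h3; case: (ggcd_spec a j N0) => g1 g2 g3.
by apply/eqP; rewrite eqn_dvd (h3 _ g1 g2) (g3 _ h1 h2).
Qed.

Lemma ggcd_mul a l N d : 0 < N -> d %| N ->
  ggcd a (d ^ a * l) N = d * ggcd a l (N %/ d).
Proof.
move=> N0 dN.
have d0 : 0 < d := dvdn_gt0 N0 dN.
have da : 0 < d ^ a by rewrite expn_gt0 d0.
have M0 : 0 < N %/ d by rewrite divn_gt0 // dvdn_leq.
case: (ggcd_spec a l M0) => g1 g2 g3.
set g := ggcd a l (N %/ d) in g1 g2 g3 *.
apply: ggcd_char => //.
- by rewrite -[X in _ %| X](divnK dN) (mulnC d g) dvdn_pmul2r.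
- by rewrite expnMn dvdn_pmul2l.
move=> e eN ej.
have e2j : (lcmn e d) ^ a %| d ^ a * l.
  by apply: pow_lcm_dvd => //; exact: dvdn_mulr (dvdnn _).
have [t ht] : exists t, lcmn e d = d * t.
  by exists (lcmn e d %/ d); rewrite mulnC divnK // dvdn_lcmr.
apply: (dvdn_trans (dvdn_lcml e d)); rewrite ht dvdn_pmul2l //; apply: g3.
  by rewrite -(dvdn_pmul2l d0) -ht [d * _]mulnC divnK // dvdn_lcm eN dN.
by rewrite -(dvdn_pmul2l da) -expnMn -ht.
Qed.

Lemma sfun_red a (f g : nat -> algC) k j N : 0 < N -> 0 < k -> k %| N ->
  sfun a f g k j = sfun 1 f g k (ggcd a j N).
Proof.
move=> N0 k0 kN; case: (ggcd_spec a j N0) => c1 c2 c3.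
rewrite /sfun big_seq_cond [RHS]big_seq_cond; apply: eq_bigl => d.
case dk: (d \in divisors k) => //=; rewrite expn1; apply/idP/idP.
  by move=> h; apply: c3 h; rewrite -dvdn_divisors // in dk; exact: dvdn_trans dk kN.
by move=> h; exact: dvdn_trans (dvdn_exp2r a h) c2.
Qed.

Local Open Scope ring_scope.
Lemma reidx c M (G : nat -> algC) : (0 < c)%N ->
  \sum_(1 <= j < (c * M)%N.+1 | (c %| j)%N) G j = \sum_(1 <= l < M.+1) G (c * l)%N.
Proof.
move=> c0; elim: M => [|M IH]; first by rewrite muln0 !big_geq.
rewrite big_nat_recr //= (@big_cat_nat _ _ _ (c * M)%N.+1) //=; last first.
  by rewrite ltnS leq_mul2l leqnSn orbT.
rewrite IH; congr (_ + _).
rewrite big_mkcond big_nat_recr /=; last by rewrite (ltn_pmul2l c0).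
rewrite dvdn_mulr // big_nat_cond big1 ?add0r // => j /andP[/andP[h1 h2] _].
case: ifP => // /dvdnP[q hq]; exfalso; subst j.
rewrite [(q * c)%N]mulnC !ltn_pmul2l // in h1 h2; lia.
Qed.

Lemma sum_pick (s : seq nat) (x : nat) (X : nat -> algC) : uniq s -> x \in s ->
  \sum_(d <- s | x == d) X d = X x.
Proof.
move=> us xs; rewrite big_mkcond (bigD1_seq x) //= eqxx big1 ?addr0 //.
by move=> d; rewrite eq_sym => /negbTE ->.
Qed.

Lemma decomp (a K : nat) (w H : nat -> algC) : (0 < K)%N ->
  \sum_(1 <= j < (K ^ a).+1) w j * H (ggcd a j K) =
  \sum_(d <- divisors K) H d *
     \sum_(1 <= l < ((K %/ d) ^ a).+1 | ggcd a l (K %/ d) == 1%N) w (d ^ a * l)%N.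
Proof.
move=> K0.
have step : forall j, w j * H (ggcd a j K) =
    \sum_(d <- divisors K) (if ggcd a j K == d then w j * H d else 0).
  move=> j; rewrite -big_mkcond sum_pick ?divisors_uniq //.
  by case: (ggcd_spec a j K0) => g1 _ _; rewrite -dvdn_divisors.
rewrite (eq_bigr _ (fun j _ => step j)) exchange_big /=.
rewrite big_seq [RHS]big_seq; apply: eq_bigr => d dK.
rewrite -dvdn_divisors // in dK.
set M := (K %/ d)%N.
have d0 : (0 < d)%N := dvdn_gt0 K0 dK.
have da : (0 < d ^ a)%N by rewrite expn_gt0 d0.
have KM : K = (d * M)%N by rewrite /M mulnC divnK.
rewrite -big_mkcond /= -mulr_suml mulrC; congr (_ * _).
transitivity (\sum_(1 <= j < (d ^ a * M ^ a)%N.+1 | (d ^ a %| j)%N)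
                 (if ggcd a j K == d then w j else 0)).
  rewrite -expnMn -KM big_mkcond [RHS]big_mkcond; apply: eq_bigr => j _.
  case: ifP => [/eqP h|_]; last by case: ifP.
  by case: (ggcd_spec a j K0) => _ g2 _; rewrite -h g2.
rewrite (@reidx (d ^ a) (M ^ a) (fun j => if ggcd a j K == d then w j else 0)) // [RHS]big_mkcond; apply: eq_bigr => l _.
by rewrite ggcd_mul // -/M -{2}(muln1 d) eqn_pmul2l.
Qed.

Lemma Phi_sum a M : (Phi a M)%:R =
  \sum_(1 <= l < (M ^ a).+1 | ggcd a l M == 1%N) (1 : algC).
Proof.
rewrite /Phi -sum1_card natr_sum.
rewrite (eq_bigl (fun l : 'I_(M ^ a).+1 => (0 < l)%N && (ggcd a l M == 1%N))); last first.
  by move=> l; rewrite inE.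
rewrite -(big_mkord (fun l => (0 < l)%N && (ggcd a l M == 1%N)) (fun _ => 1%:R)).
rewrite big_ltn_cond //= [LHS]big_nat_cond [RHS]big_nat_cond.
by apply: eq_bigl => l; case: l.
Qed.

Theorem mainTheorem9 (a n : nat) (k : 'I_n -> nat) (f g : 'I_n -> nat -> algC)
  (omega : nat -> algC) :
  (0 < a)%N -> (0 < n)%N -> (forall i, 0 < k i)%N ->
  let K := \big[lcmn/1%N]_(i < n) k i in
  let H := fun m : nat => \prod_(i < n) sfun 1 (f i) (g i) (k i) m in
  (completely_multiplicative omega ->
     \sum_(1 <= j < (K ^ a).+1) omega j * \prod_(i < n) sfun a (f i) (g i) (k i) j
     = \sum_(d <- divisors K) omega d ^+ a * H d * Psi omega a (K %/ d)%N)
  /\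
  (completely_additive omega ->
     \sum_(1 <= j < (K ^ a).+1) omega j * \prod_(i < n) sfun a (f i) (g i) (k i) j
     = \sum_(d <- divisors K) omega (d ^ a)%N * H d * (Phi a (K %/ d)%N)%:R
       + \sum_(d <- divisors K) H d * Psi omega a (K %/ d)%N).
Proof.
move=> a0 n0 k0 K H.
have K0 : (0 < K)%N.
  by rewrite /K; apply: (big_ind (fun x => 0 < x)%N) => // x y x0 y0; rewrite lcmn_gt0 x0 y0.
have E : \sum_(1 <= j < (K ^ a).+1) omega j * \prod_(i < n) sfun a (f i) (g i) (k i) j
    = \sum_(1 <= j < (K ^ a).+1) omega j * H (ggcd a j K).
  apply: eq_bigr => j _; congr (_ * _); rewrite /H; apply: eq_bigr => i _.
  by apply: sfun_red => //; rewrite /K (biglcmn_sup i).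
rewrite E decomp //; split => hw.
  case: hw => w1 wM.
  have wX : forall d e, (0 < d)%N -> omega (d ^ e)%N = omega d ^+ e.
    move=> d e d0; elim: e => [|e IH]; first by rewrite expn0 w1.
    by rewrite expnS wM ?expn_gt0 ?d0 // IH exprS.
  rewrite big_seq [RHS]big_seq; apply: eq_bigr => d dK.
  have d0 : (0 < d)%N by rewrite -dvdn_divisors // in dK; exact: dvdn_gt0 K0 dK.
  rewrite /Psi.
  set S1 := \sum_(_ <= _ < _ | _) _.
  have -> : S1 = omega d ^+ a * \sum_(1 <= l < ((K %/ d) ^ a).+1 | ggcd a l (K %/ d) == 1%N) omega l.
    rewrite /S1 mulr_sumr [LHS]big_nat_cond [RHS]big_nat_cond.
    apply: eq_bigr => l /andP[/andP[l1 _] _].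
    by rewrite wM ?expn_gt0 ?d0 // wX.
  ring.
rewrite -big_split /= big_seq [RHS]big_seq; apply: eq_bigr => d dK.
have d0 : (0 < d)%N by rewrite -dvdn_divisors // in dK; exact: dvdn_gt0 K0 dK.
rewrite Phi_sum /Psi.
set S1 := \sum_(1 <= l < ((K %/ d) ^ a).+1 | ggcd a l (K %/ d) == 1%N) omega (d ^ a * l)%N.
have -> : S1 = \sum_(1 <= l < ((K %/ d) ^ a).+1 | ggcd a l (K %/ d) == 1%N)
                 (omega (d ^ a)%N * 1 + omega l).
  rewrite /S1 [LHS]big_nat_cond [RHS]big_nat_cond.
  apply: eq_bigr => l /andP[/andP[l1 _] _].
  by rewrite hw ?expn_gt0 ?d0 // mulr1.
rewrite big_split /= -mulr_sumr.
ring.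
Qed.
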